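(* Let $\alpha$ be a unit-speed curve in $\mathbb{R}^3$ with arc length $s$, nonzero curvature $\kappa$ and torsion $\tau$. Let $\alpha_T$ be its tangent indicatrix, with arc length $s_T=\int\kappa\,ds$, and let $\beta$ be an evolute-direction curve of $\alpha_T$ (an $X$-direction curve of $\alpha_T$ with $N_\beta=T_T$). Then there is a function $\psi(s)$ with $$\frac{d\psi}{ds}=\frac{\kappa^3}{(\kappa^2+\tau^2)^{3/2}}\Big(\frac{\tau}{\kappa}\Big)'\sqrt{1+\Big(\frac{\tau}{\kappa}\Big)^2}$$ such that, at corresponding parameter values, $$\frac{\tau_\beta}{\kappa_\beta}=-\cot\psi.$$ Moreover, $$\frac{\kappa_\beta^2}{(\kappa_\beta^2+\tau_\beta^2)^{3/2}}\,\frac{d}{ds_T}\Big(\frac{\tau_\beta}{\kappa_\beta}\Big)=\frac{\kappa^2}{(\kappa^2+\tau^2)^{3/2}}\Big(\frac{\tau}{\kappa}\Big)'.$$ Here $'$ denotes $d/ds$.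
   Context: Let $\alpha:I\subset\mathbb{R}\to\mathbb{R}^3$ be a unit-speed curve with arc length $s$, curvature $\kappa>0$, torsion $\tau$ and Frenet frame $\{T,N,B\}$. Put $f=\tau/\kappa$ and $\sigma=\frac{\kappa^2}{(\kappa^2+\tau^2)^{3/2}}(\tau/\kappa)'$, with $'=d/ds$. The tangent indicatrix of $\alpha$ is the curve $\alpha_T=T$ on the unit sphere. Its arc length is $s_T=\int\kappa\,ds$, so parameters $s$ and $s_T(s)$ correspond. Its Frenet apparatus is $\{T_T,N_T,B_T,\kappa_T,\tau_T\}$, with $\frac{dT_T}{ds_T}=\kappa_TN_T$, $\frac{dN_T}{ds_T}=-\kappa_TT_T+\tau_TB_T$ and $\frac{dB_T}{ds_T}=-\tau_TN_T$. It is known that $T_T=N$, $\kappa_T=\sqrt{1+f^2}$ and $\tau_T=\sigma\sqrt{1+f^2}$. Let $x,y,z$ be real functions of $s_T$ with $x^2+y^2+z^2=1$, and set $X=xT_T+yN_T+zB_T$. An integral curve $\beta$ of $X$, meaning $d\beta/ds_T=X$, is an $X$-direction curve of $\alpha_T$. It has unit speed with arc length $s_T$. It is regarded as a Frenet curve with frame $\{T_\beta=X,N_\beta,B_\beta\}$, curvature $\kappa_\beta>0$ and torsion $\tau_\beta$. $\beta$ is an evolute-direction curve of $\alpha_T$ if $N_\beta=T_T$. *)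

(* Defs.v *)
From Stdlib Require Import Reals.
From Coquelicot Require Import Coquelicot.
Open Scope R_scope.

Definition vec3 : Type := (R * R * R)%type.
Definition v3 (a b c : R) : vec3 := (a, b, c).
Definition vx (v : vec3) : R := fst (fst v).
Definition vy (v : vec3) : R := snd (fst v).
Definition vz (v : vec3) : R := snd v.

Definition vadd (u v : vec3) : vec3 := v3 (vx u + vx v) (vy u + vy v) (vz u + vz v).
Definition vscal (k : R) (v : vec3) : vec3 := v3 (k * vx v) (k * vy v) (k * vz v).
Definition dot (u v : vec3) : R := vx u * vx v + vy u * vy v + vz u * vz v.
Definition cross (u v : vec3) : vec3 :=
  v3 (vy u * vz v - vz u * vy v)
     (vz u * vx v - vx u * vz v)
     (vx u * vy v - vy u * vx v).

Definition has_vderiv (f : R -> vec3) (t : R) (v : vec3) : Prop :=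
  is_derive (fun s => vx (f s)) t (vx v) /\
  is_derive (fun s => vy (f s)) t (vy v) /\
  is_derive (fun s => vz (f s)) t (vz v).

Definition frenet_apparatus (D : R -> Prop) (c T N B : R -> vec3)
    (k tau : R -> R) : Prop :=
  forall t, D t ->
    has_vderiv c t (T t) /\
    has_vderiv T t (vscal (k t) (N t)) /\
    has_vderiv N t (vadd (vscal (- k t) (T t)) (vscal (tau t) (B t))) /\
    has_vderiv B t (vscal (- tau t) (N t)) /\
    0 < k t /\
    dot (T t) (T t) = 1 /\ dot (N t) (N t) = 1 /\ dot (T t) (N t) = 0 /\
    B t = cross (T t) (N t).

(* Main.v *)
Require Import Defs.
From Stdlib Require Import Reals Lra.
From Coquelicot Require Import Coquelicot.
Open Scope R_scope.

Lemma vec3_ext (u v : vec3) : vx u = vx v -> vy u = vy v -> vz u = vz v -> u = v.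
Proof. destruct u as [[a b] c], v as [[d e] f]; unfold vx, vy, vz; simpl; intros; subst; reflexivity. Qed.

Ltac vsimpl := unfold dot, cross, vadd, vscal, v3, vx, vy, vz; simpl.

Lemma dot_add_l u v w : dot (vadd u v) w = dot u w + dot v w. Proof. vsimpl; ring. Qed.
Lemma dot_add_r u v w : dot w (vadd u v) = dot w u + dot w v. Proof. vsimpl; ring. Qed.
Lemma dot_scal_l c u w : dot (vscal c u) w = c * dot u w. Proof. vsimpl; ring. Qed.
Lemma dot_scal_r c u w : dot w (vscal c u) = c * dot w u. Proof. vsimpl; ring. Qed.
Lemma dot_comm u v : dot u v = dot v u. Proof. vsimpl; ring. Qed.
Lemma dot_cross_l u v : dot u (cross u v) = 0. Proof. vsimpl; ring. Qed.
Lemma dot_cross_r u v : dot v (cross u v) = 0. Proof. vsimpl; ring. Qed.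
Lemma dot_cross_cross u v : dot (cross u v) (cross u v) = dot u u * dot v v - dot u v * dot u v.
Proof. vsimpl; ring. Qed.
Lemma triple_perm u v w : dot (cross u v) w = dot u (cross v w). Proof. vsimpl; ring. Qed.
Lemma cross_anti u v : cross u v = vscal (-1) (cross v u).
Proof. apply vec3_ext; vsimpl; ring. Qed.
Lemma cross_add_r u v w : cross w (vadd u v) = vadd (cross w u) (cross w v).
Proof. apply vec3_ext; vsimpl; ring. Qed.
Lemma cross_scal_r c u w : cross w (vscal c u) = vscal c (cross w u).
Proof. apply vec3_ext; vsimpl; ring. Qed.
Lemma cross_bac u v : cross v (cross u v) = vadd (vscal (dot v v) u) (vscal (- dot v u) v).
Proof. apply vec3_ext; vsimpl; ring. Qed.
Lemma vscal_vscal a b u : vscal a (vscal b u) = vscal (a*b) u.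
Proof. apply vec3_ext; vsimpl; ring. Qed.
Lemma vscal_1 u : vscal 1 u = u.
Proof. apply vec3_ext; vsimpl; ring. Qed.

Lemma has_vderiv_comp F g t v dg :
  has_vderiv F (g t) v -> is_derive g t dg -> has_vderiv (fun s => F (g s)) t (vscal dg v).
Proof.
  intros [H1 [H2 H3]] Hg; split; [|split]; unfold vscal, v3, vx, vy, vz in *; simpl in *.
  - exact (is_derive_comp (fun u => fst (fst (F u))) g t _ _ H1 Hg).
  - exact (is_derive_comp (fun u => snd (fst (F u))) g t _ _ H2 Hg).
  - exact (is_derive_comp (fun u => snd (F u)) g t _ _ H3 Hg).
Qed.

Lemma has_vderiv_ext_loc F G t v :
  locally t (fun s => F s = G s) -> has_vderiv F t v -> has_vderiv G t v.
Proof.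
  intros Hl [H1 [H2 H3]]; split; [|split].
  - eapply is_derive_ext_loc; [|exact H1]. eapply filter_imp; [|exact Hl]. intros s ->; reflexivity.
  - eapply is_derive_ext_loc; [|exact H2]. eapply filter_imp; [|exact Hl]. intros s ->; reflexivity.
  - eapply is_derive_ext_loc; [|exact H3]. eapply filter_imp; [|exact Hl]. intros s ->; reflexivity.
Qed.

Lemma has_vderiv_unique F t v w : has_vderiv F t v -> has_vderiv F t w -> v = w.
Proof.
  intros [H1 [H2 H3]] [K1 [K2 K3]]; apply vec3_ext.
  - apply is_derive_unique in H1; apply is_derive_unique in K1; congruence.
  - apply is_derive_unique in H2; apply is_derive_unique in K2; congruence.
  - apply is_derive_unique in H3; apply is_derive_unique in K3; congruence.
Qed.

Lemma isd_plus (f g : R -> R) t a b : is_derive f t a -> is_derive g t b -> is_derive (fun s => f s + g s) t (a + b).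
Proof. intros; apply (is_derive_plus f g); auto. Qed.
Lemma isd_mult (f g : R -> R) t a b : is_derive f t a -> is_derive g t b -> is_derive (fun s => f s * g s) t (a * g t + f t * b).
Proof. intros; apply (is_derive_mult f g); auto. intros; apply Rmult_comm. Qed.

Lemma is_derive_dot F G t F' G' :
  has_vderiv F t F' -> has_vderiv G t G' ->
  is_derive (fun s => dot (F s) (G s)) t (dot F' (G t) + dot (F t) G').
Proof.
  intros [H1 [H2 H3]] [K1 [K2 K3]]. unfold dot.
  replace (vx F' * vx (G t) + vy F' * vy (G t) + vz F' * vz (G t) +
    (vx (F t) * vx G' + vy (F t) * vy G' + vz (F t) * vz G'))
  with ((vx F' * vx (G t) + vx (F t) * vx G') + (vy F' * vy (G t) + vy (F t) * vy G')
        + (vz F' * vz (G t) + vz (F t) * vz G')) by ring.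
  apply isd_plus; [apply isd_plus|]; apply isd_mult; assumption.
Qed.

Lemma has_vderiv_scal c F t c' F' :
  is_derive c t c' -> has_vderiv F t F' ->
  has_vderiv (fun s => vscal (c s) (F s)) t (vadd (vscal c' (F t)) (vscal (c t) F')).
Proof.
  intros Hc [H1 [H2 H3]]; split; [|split]; unfold vadd, vscal, v3, vx, vy, vz in *; simpl in *;
  apply isd_mult; auto.
Qed.

Lemma has_vderiv_add F G t F' G' :
  has_vderiv F t F' -> has_vderiv G t G' ->
  has_vderiv (fun s => vadd (F s) (G s)) t (vadd F' G').
Proof.
  intros [H1 [H2 H3]] [K1 [K2 K3]]; split; [|split]; unfold vadd, vscal, v3, vx, vy, vz in *; simpl in *;
  apply isd_plus; auto.
Qed.

Lemma is_derive_loc0 (F : R -> R) t l : locally t (fun s => F s = 0) -> is_derive F t l -> l = 0.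
Proof.
  intros Hl H. assert (H0 : is_derive F t 0).
  { eapply is_derive_ext_loc. eapply filter_imp; [|exact Hl]. intros s Hs. simpl. symmetry. exact Hs.
    apply (is_derive_const 0). }
  apply is_derive_unique in H; apply is_derive_unique in H0; congruence.
Qed.

Lemma frame_facts T N B : dot T T = 1 -> dot N N = 1 -> dot T N = 0 -> B = cross T N ->
  dot B B = 1 /\ dot T B = 0 /\ dot N B = 0 /\ dot B T = 0 /\ dot B N = 0 /\ dot N T = 0 /\
  cross N B = T /\ cross N T = vscal (-1) B.
Proof.
  intros h1 h2 h3 ->.
  assert (dot T (cross T N) = 0) by apply dot_cross_l.
  assert (dot N (cross T N) = 0) by apply dot_cross_r.
  rewrite dot_cross_cross, h1, h2, h3. rewrite (dot_comm (cross T N)), (dot_comm (cross T N)), (dot_comm N T).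
  repeat split; auto; try ring.
  - rewrite cross_bac, h2, dot_comm, h3. apply vec3_ext; vsimpl; ring.
  - apply cross_anti.
Qed.

Lemma vscal_inv_eq c u v : c <> 0 -> vscal c u = vscal c v -> u = v.
Proof.
  intros hc h. rewrite <- (vscal_1 u), <- (vscal_1 v), <- (Rinv_l c hc), <- !vscal_vscal, h. reflexivity.
Qed.

Lemma isd_comp (f g : R -> R) x df dg : is_derive f (g x) df -> is_derive g x dg ->
  is_derive (fun t => f (g t)) x (dg * df).
Proof. intros; exact (is_derive_comp f g x df dg H H0). Qed.

Lemma isd_const (c t : R) : is_derive (fun _ : R => c) t 0.
Proof. exact (is_derive_const c t). Qed.
Lemma isd_minus (f g : R -> R) t a b : is_derive f t a -> is_derive g t b -> is_derive (fun s => f s - g s) t (a - b).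
Proof. intros; apply (is_derive_minus f g); auto. Qed.
Lemma isd_opp (f : R -> R) t a : is_derive f t a -> is_derive (fun s => - f s) t (- a).
Proof. intros; apply (is_derive_opp f); auto. Qed.

Lemma isd_val (f : R -> R) x (l l' : R) : is_derive f x l -> @eq R l l' -> is_derive f x l'.
Proof. intros H <-; exact H. Qed.

Lemma ball_R (x y : R) (e : R) : ball x e y <-> Rabs (y - x) < e.
Proof. reflexivity. Qed.

Lemma J_loc (I : R -> Prop) (sT k : R -> R) :
  (forall s, I s -> locally s I) -> (forall s, I s -> is_derive sT s (k s)) ->
  (forall s, I s -> 0 < k s) ->
  forall s, I s -> locally (sT s) (fun u => exists s', I s' /\ u = sT s').
Proof.
  intros HI Hd Hk s Hs.
  destruct (HI s Hs) as [eps Heps].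
  set (s1 := s - eps/2). set (s2 := s + eps/2).
  assert (Hin : forall t, s1 <= t <= s2 -> I t).
  { intros t Ht. apply Heps. apply ball_R. pose proof (cond_pos eps).
    unfold s1, s2 in Ht. apply Rabs_def1; lra. }
  assert (He := cond_pos eps).
  assert (Hcont : forall t, s1 <= t <= s2 -> continuity_pt sT t).
  { intros t Ht. apply continuity_pt_filterlim. apply (ex_derive_continuous sT).
    eexists; apply Hd; apply Hin; auto. }
  assert (Hmono : forall p q, s1 <= p -> p < q -> q <= s2 -> sT p < sT q).
  { intros p q Hp Hpq Hq.
    destruct (MVT_gen sT p q k) as [c [Hc Heq]].
    - intros x Hx. rewrite Rmin_left in Hx by lra. rewrite Rmax_right in Hx by lra.
      apply Hd, Hin; lra.
    - intros x Hx. rewrite Rmin_left in Hx by lra. rewrite Rmax_right in Hx by lra.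
      apply Hcont; lra.
    - rewrite Rmin_left in Hc by lra. rewrite Rmax_right in Hc by lra.
      assert (0 < k c) by (apply Hk, Hin; lra).
      assert (0 < k c * (q - p)) by (apply Rmult_lt_0_compat; lra). lra. }
  assert (A1 : sT s1 < sT s) by (apply Hmono; unfold s1, s2; lra).
  assert (A2 : sT s < sT s2) by (apply Hmono; unfold s1, s2; lra).
  assert (Hd0 : 0 < Rmin (sT s - sT s1) (sT s2 - sT s)) by (apply Rmin_pos; lra).
  exists (mkposreal _ Hd0). intros v Hv. apply ball_R in Hv. simpl in Hv.
  assert (B1 := Rmin_l (sT s - sT s1) (sT s2 - sT s)).
  assert (B2 := Rmin_r (sT s - sT s1) (sT s2 - sT s)).
  apply Rabs_def2 in Hv. change (minus v (sT s)) with (v - sT s) in Hv.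
  destruct (Ranalysis5.IVT_interv (fun t => sT t - v) s1 s2) as [t [Ht Hft]].
  - intros a0 Ha. apply continuity_pt_minus; [apply Hcont; auto| apply continuity_pt_const; intros ? ?; reflexivity].
  - unfold s1, s2; lra.
  - simpl. lra.
  - simpl. lra.
  - exists t. split; [apply Hin; auto| simpl in Hft; lra].
Qed.

Ltac dexp H := repeat (rewrite dot_add_l in H || rewrite dot_add_r in H || rewrite dot_scal_l in H || rewrite dot_scal_r in H).
Ltac dexpg := repeat (rewrite dot_add_l || rewrite dot_add_r || rewrite dot_scal_l || rewrite dot_scal_r).

Theorem corollary4p6
  (a b : Rbar)
  (alpha T N B : R -> vec3) (k tau : R -> R)
  (sT : R -> R)
  (alphaT TT NT BT : R -> vec3) (kT tauT : R -> R)
  (x y z : R -> R)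
  (beta Nb Bb : R -> vec3) (kb taub : R -> R) :
  let I := fun s : R => Rbar_lt a (Finite s) /\ Rbar_lt (Finite s) b in
  let J := fun u : R => exists s : R, I s /\ u = sT s in
  let X := fun u : R => vadd (vadd (vscal (x u) (TT u)) (vscal (y u) (NT u)))
                         (vscal (z u) (BT u)) in
  frenet_apparatus I alpha T N B k tau ->
  (forall s : R, I s -> ex_derive k s /\ ex_derive tau s) ->
  (forall s : R, I s -> is_derive sT s (k s)) ->
  (forall s : R, I s -> alphaT (sT s) = T s) ->
  frenet_apparatus J alphaT TT NT BT kT tauT ->
  (forall u : R, J u -> x u ^ 2 + y u ^ 2 + z u ^ 2 = 1) ->
  (forall u : R, J u -> has_vderiv beta u (X u)) ->
  frenet_apparatus J beta X Nb Bb kb taub ->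
  (forall u : R, J u -> Nb u = TT u) ->
  (exists psi : R -> R, forall s : R, I s ->
      is_derive psi s
        (k s ^ 3 / (sqrt (k s ^ 2 + tau s ^ 2)) ^ 3
         * Derive (fun r => tau r / k r) s
         * sqrt (1 + (tau s / k s) ^ 2)) /\
      taub (sT s) / kb (sT s) = - (cos (psi s) / sin (psi s)))
  /\
  (forall s : R, I s ->
      kb (sT s) ^ 2 / (sqrt (kb (sT s) ^ 2 + taub (sT s) ^ 2)) ^ 3
        * Derive (fun u => taub u / kb u) (sT s)
      = k s ^ 2 / (sqrt (k s ^ 2 + tau s ^ 2)) ^ 3
        * Derive (fun r => tau r / k r) s).
Proof.
  intros I J X HF Hkt HsT HaT HFT Hxyz Hbeta HFb HNb.
  set (f := fun r => tau r / k r).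
  set (fd := fun r => Derive f r).
  assert (HIo : forall s, I s -> locally s I).
  { intros s Hs. apply (open_and _ _ (open_Rbar_gt a) (open_Rbar_lt b)); exact Hs. }
  assert (HJs : forall s, I s -> J (sT s)) by (intros s Hs; exists s; auto).
  assert (HJloc : forall s, I s -> locally (sT s) J).
  { intros s Hs. apply (J_loc I sT k HIo HsT); auto. intros r Hr; apply (HF r Hr). }
  assert (Hfd : forall s, I s -> is_derive f s (fd s)).
  { intros s Hs. unfold fd. apply Derive_correct. destruct (Hkt s Hs) as [[dk Hdk] [dt Hdt]].
    eexists. unfold f. apply is_derive_div; eauto. destruct (HF s Hs) as [_ [_ [_ [_ [h _]]]]]. lra. }
  assert (HA : forall s, I s -> TT (sT s) = N s).
  { intros s Hs.
    destruct (HF s Hs) as [_ [HdT [_ [_ [Hk _]]]]].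
    destruct (HFT (sT s) (HJs s Hs)) as [HdaT _].
    pose proof (has_vderiv_comp alphaT sT s _ _ HdaT (HsT s Hs)) as H1.
    assert (H2 : has_vderiv (fun r => alphaT (sT r)) s (vscal (k s) (N s))).
    { eapply has_vderiv_ext_loc; [|exact HdT]. eapply filter_imp; [|exact (HIo s Hs)].
      intros r Hr; simpl; symmetry; apply HaT; exact Hr. }
    eapply vscal_inv_eq; [|exact (has_vderiv_unique _ _ _ _ H1 H2)]. lra. }
  set (V := fun r => vadd (vscal (-1) (T r)) (vscal (f r) (B r))).
  set (S := fun r => sqrt (1 + f r ^ 2)).
  assert (HFF : forall s, I s -> dot (B s) (B s) = 1 /\ dot (T s) (B s) = 0 /\ dot (N s) (B s) = 0 /\
     dot (B s) (T s) = 0 /\ dot (B s) (N s) = 0 /\ dot (N s) (T s) = 0 /\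
     cross (N s) (B s) = T s /\ cross (N s) (T s) = vscal (-1) (B s) /\
     dot (T s) (T s) = 1 /\ dot (N s) (N s) = 1 /\ dot (T s) (N s) = 0 /\ 0 < k s).
  { intros s Hs. destruct (HF s Hs) as [_ [_ [_ [_ [Hk [h1 [h2 [h3 h4]]]]]]]].
    pose proof (frame_facts _ _ _ h1 h2 h3 h4). tauto. }
  assert (HFT2 : forall u, J u -> dot (BT u) (BT u) = 1 /\ dot (TT u) (BT u) = 0 /\ dot (NT u) (BT u) = 0 /\
     dot (BT u) (TT u) = 0 /\ dot (BT u) (NT u) = 0 /\ dot (NT u) (TT u) = 0 /\
     dot (TT u) (TT u) = 1 /\ dot (NT u) (NT u) = 1 /\ dot (TT u) (NT u) = 0 /\ 0 < kT u).
  { intros u Hu. destruct (HFT u Hu) as [_ [_ [_ [_ [Hk [h1 [h2 [h3 h4]]]]]]]].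
    pose proof (frame_facts _ _ _ h1 h2 h3 h4). tauto. }
  assert (HB : forall s, I s -> vscal (kT (sT s)) (NT (sT s)) = V s).
  { intros s Hs.
    destruct (HF s Hs) as [_ [_ [HdN [_ [Hk _]]]]].
    destruct (HFT (sT s) (HJs s Hs)) as [_ [HdTT _]].
    pose proof (has_vderiv_comp TT sT s _ _ HdTT (HsT s Hs)) as H1.
    assert (H2 : has_vderiv (fun r => TT (sT r)) s (vadd (vscal (- k s) (T s)) (vscal (tau s) (B s)))).
    { eapply has_vderiv_ext_loc; [|exact HdN]. eapply filter_imp; [|exact (HIo s Hs)].
      intros r Hr; simpl; symmetry; apply HA; exact Hr. }
    pose proof (has_vderiv_unique _ _ _ _ H1 H2) as H3.
    apply (vscal_inv_eq (k s)); [lra|]. rewrite H3. unfold V, f.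
    apply vec3_ext; vsimpl; field; lra. }
  assert (HB' : forall s, I s -> kT (sT s) = S s).
  { intros s Hs. pose proof (HB s Hs) as H.
    destruct (HFF s Hs) as [b1 [b2 [b3 [b4 [b5 [b6 [_ [_ [b9 [b10 [b11 b12]]]]]]]]]]].
    destruct (HFT2 _ (HJs s Hs)) as [_ [_ [_ [_ [_ [_ [_ [c8 [_ c10]]]]]]]]].
    assert (E : dot (V s) (V s) = 1 + f s ^ 2).
    { unfold V. dexpg. rewrite b1, b2, b4, b9. ring. }
    rewrite <- H, dot_scal_l, dot_scal_r, c8 in E. unfold S. rewrite <- E.
    rewrite Rmult_1_r, <- Rsqr_def, sqrt_Rsqr; lra. }
  assert (HS : forall s, I s -> 0 < S s /\ S s * S s = 1 + f s ^ 2).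
  { intros s Hs. unfold S. split. apply sqrt_lt_R0. nra. apply sqrt_sqrt. nra. }
  assert (HNT : forall r, I r -> NT (sT r) = vscal (/ S r) (V r)).
  { intros r Hr. rewrite <- (HB r Hr), (HB' r Hr), vscal_vscal, Rinv_l, vscal_1. reflexivity.
    pose proof (HS r Hr). lra. }
  assert (HC : forall s, I s -> k s * tauT (sT s) = fd s / (1 + f s ^ 2)).
  { intros s Hs.
    destruct (HF s Hs) as [_ [HdT [HdN [HdB [Hk _]]]]].
    destruct (HFT (sT s) (HJs s Hs)) as [_ [_ [HdNT [_ [_ [_ [_ [_ HBT]]]]]]]].
    destruct (HS s Hs) as [HS1 HS2].
    assert (Hc : exists c', is_derive (fun r => / S r) s c').
    { eexists. apply is_derive_inv; [|lra]. unfold S. apply is_derive_sqrt; [|nra].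
      apply isd_plus; [apply isd_const| apply is_derive_pow; apply Hfd; exact Hs]. }
    destruct Hc as [c' Hc].
    assert (HV : has_vderiv V s (vadd (vadd (vscal 0 (T s)) (vscal (-1) (vscal (k s) (N s))))
                 (vadd (vscal (fd s) (B s)) (vscal (f s) (vscal (- tau s) (N s)))))).
    { unfold V. apply has_vderiv_add; apply has_vderiv_scal; auto. apply isd_const. }
    pose proof (has_vderiv_scal _ _ _ _ _ Hc HV) as H1.
    pose proof (has_vderiv_comp NT sT s _ _ HdNT (HsT s Hs)) as H2.
    assert (H3 : has_vderiv (fun r => NT (sT r)) s
       (vadd (vscal c' (V s)) (vscal (/ S s) (vadd (vadd (vscal 0 (T s)) (vscal (-1) (vscal (k s) (N s))))
                 (vadd (vscal (fd s) (B s)) (vscal (f s) (vscal (- tau s) (N s)))))))).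
    { eapply has_vderiv_ext_loc; [|exact H1]. eapply filter_imp; [|exact (HIo s Hs)].
      intros r Hr; simpl. symmetry. apply HNT; exact Hr. }
    pose proof (f_equal (fun w => dot w (BT (sT s))) (has_vderiv_unique _ _ _ _ H2 H3)) as E.
    simpl in E.
    destruct (HFT2 _ (HJs s Hs)) as [c1 [c2 [c3 [c4 [c5 [c6 [c7 [c8 [c9 c10]]]]]]]]].
    dexp E. rewrite c2, c1 in E.
    assert (HBT' : BT (sT s) = vscal (/ S s) (vadd (B s) (vscal (f s) (T s)))).
    { rewrite HBT, HA, HNT by exact Hs.
      rewrite cross_scal_r. f_equal. unfold V.
      destruct (HFF s Hs) as [b1 [b2 [b3 [b4 [b5 [b6 [b7 [b8 _]]]]]]]].
      rewrite cross_add_r, !cross_scal_r, b7, b8. apply vec3_ext; vsimpl; ring. }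
    rewrite HBT' in E. unfold V in E.
    destruct (HFF s Hs) as [b1 [b2 [b3 [b4 [b5 [b6 [b7 [b8 [b9 [b10 [b11 b12]]]]]]]]]]].
    dexp E. rewrite ?b1, ?b2, ?b3, ?b4, ?b5, ?b6, ?b9, ?b10, ?b11 in E.
    rewrite <- HS2. replace (k s * tauT (sT s)) with (k s * (- kT (sT s) * 0 + tauT (sT s) * 1)) by ring.
    rewrite E. field. lra. }
  assert (HD : forall s, I s ->
     x (sT s) = 0 /\ y (sT s) = dot (X (sT s)) (NT (sT s)) /\ z (sT s) = dot (X (sT s)) (BT (sT s)) /\
     kb (sT s) = - kT (sT s) * y (sT s) /\ taub (sT s) = kT (sT s) * z (sT s) /\
     is_derive (fun v => dot (X v) (NT v)) (sT s) (tauT (sT s) * z (sT s)) /\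
     is_derive (fun v => dot (X v) (BT v)) (sT s) (- tauT (sT s) * y (sT s))).
  { intros s Hs. set (u := sT s).
    assert (Hu : J u) by (apply HJs; exact Hs).
    assert (Hxyz' : forall v, J v -> dot (X v) (TT v) = x v /\ dot (X v) (NT v) = y v /\ dot (X v) (BT v) = z v).
    { intros v Hv. destruct (HFT2 v Hv) as [c1 [c2 [c3 [c4 [c5 [c6 [c7 [c8 [c9 c10]]]]]]]]].
      unfold X. split; [|split]; dexpg; rewrite ?c1, ?c2, ?c3, ?c4, ?c5, ?c6, ?c7, ?c8, ?c9; ring. }
    assert (HXT : forall v, J v -> dot (X v) (TT v) = 0).
    { intros v Hv. destruct (HFb v Hv) as [_ [_ [_ [_ [_ [_ [_ [h _]]]]]]]]. rewrite <- (HNb v Hv). exact h. }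
    assert (HBT0 : forall v, J v -> dot (Bb v) (TT v) = 0).
    { intros v Hv. destruct (HFb v Hv) as [_ [_ [_ [_ [_ [_ [_ [_ h]]]]]]]]. rewrite h, (HNb v Hv), dot_comm. apply dot_cross_r. }
    destruct (HFb u Hu) as [_ [HdX [_ [HdBb [Hkb _]]]]].
    destruct (HFT u Hu) as [_ [HdTT [HdNT [HdBT [HkT [_ [_ [_ hBT]]]]]]]].
    destruct (HFT2 u Hu) as [c1 [c2 [c3 [c4 [c5 [c6 [c7 [c8 [c9 c10]]]]]]]]].
    destruct (Hxyz' u Hu) as [ex [ey ez]].
    rewrite (HNb u Hu) in HdX, HdBb.
    assert (Hx0 : x u = 0) by (rewrite <- ex; apply HXT; exact Hu).
    assert (Hkb' : kb u = - kT u * y u).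
    { pose proof (is_derive_dot _ _ _ _ _ HdX HdTT) as H.
      apply is_derive_loc0 in H.
      - dexp H. rewrite c7, ey in H. lra.
      - eapply filter_imp; [|exact (HJloc s Hs)]. intros v Hv; apply HXT; exact Hv. }
    assert (Htb : taub u = kT u * z u).
    { pose proof (is_derive_dot _ _ _ _ _ HdBb HdTT) as H.
      apply is_derive_loc0 in H.
      - dexp H. destruct (HFb u Hu) as [_ [_ [_ [_ [_ [_ [_ [_ h]]]]]]]].
        rewrite h, (HNb u Hu), triple_perm, <- hBT, ez, c7 in H. lra.
      - eapply filter_imp; [|exact (HJloc s Hs)]. intros v Hv; apply HBT0; exact Hv. }
    split; [exact Hx0|]. split; [symmetry; exact ey|]. split; [symmetry; exact ez|].
    split; [exact Hkb'|]. split; [exact Htb|]. split.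
    - eapply isd_val. apply (is_derive_dot _ _ _ _ _ HdX HdNT). dexpg.
      rewrite c9, ex, ez, Hx0. ring.
    - eapply isd_val. apply (is_derive_dot _ _ _ _ _ HdX HdBT). dexpg.
      rewrite c2, ey. ring. }
  assert (HE : forall s, I s -> 0 < kT (sT s) /\ y (sT s) < 0 /\ z (sT s) ^ 2 = 1 - y (sT s) ^ 2 /\
             sqrt (k s ^ 2 + tau s ^ 2) = k s * S s).
  { intros s Hs. destruct (HD s Hs) as [Hx0 [_ [_ [Hkb [_ _]]]]].
    destruct (HFT2 _ (HJs s Hs)) as [_ [_ [_ [_ [_ [_ [_ [_ [_ HkT]]]]]]]]].
    destruct (HFb _ (HJs s Hs)) as [_ [_ [_ [_ [Hkb0 _]]]]].
    destruct (HS s Hs) as [HS1 HS2].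
    destruct (HFF s Hs) as [_ [_ [_ [_ [_ [_ [_ [_ [_ [_ [_ Hk]]]]]]]]]]].
    pose proof (Hxyz _ (HJs s Hs)) as H1. rewrite Hx0 in H1.
    split; [exact HkT|]. split; [nra|]. split; [nra|].
    rewrite <- (sqrt_pow2 (k s * S s)) by nra. f_equal.
    replace ((k s * S s) ^ 2) with (k s ^ 2 * (S s * S s)) by ring. rewrite HS2. unfold f. field. lra. }
  split.
  - set (Yf := fun s => dot (X (sT s)) (NT (sT s))).
    set (Zf := fun s => dot (X (sT s)) (BT (sT s))).
    exists (fun s => PI / 2 - atan (Zf s / Yf s)).
    intros s Hs.
    destruct (HD s Hs) as [Hx0 [ey [ez [Hkb [Htb [Hdy Hdz]]]]]].
    destruct (HE s Hs) as [HkT [Hy [Hz2 Hsq]]].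
    destruct (HS s Hs) as [HS1 HS2].
    destruct (HFF s Hs) as [_ [_ [_ [_ [_ [_ [_ [_ [_ [_ [_ Hk]]]]]]]]]]].
    assert (HY : Yf s = y (sT s)) by (unfold Yf; symmetry; exact ey).
    assert (HZ : Zf s = z (sT s)) by (unfold Zf; symmetry; exact ez).
    split.
    + pose proof (isd_comp _ sT s _ _ Hdy (HsT s Hs)) as H1.
      pose proof (isd_comp _ sT s _ _ Hdz (HsT s Hs)) as H2.
      assert (HYn : Yf s <> 0) by (rewrite HY; lra).
      pose proof (is_derive_div Zf Yf s _ _ H2 H1 HYn) as H3.
      assert (Hat : forall q, is_derive atan q (/ (1 + q ^ 2))).
      { intros q. apply is_derive_Reals. apply derivable_pt_lim_atan. }
      pose proof (isd_comp _ _ s _ _ (Hat _) H3) as H4.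
      pose proof (isd_minus _ _ s _ _ (isd_const (PI/2) s) H4) as H5.
      eapply isd_val; [exact H5|].
      unfold Yf, Zf. rewrite <- ey, <- ez, Hsq.
      transitivity (k s * tauT (sT s)).
      * field. split; [lra|nra].
      * rewrite HC by exact Hs. rewrite <- HS2.
        change (sqrt (1 + (tau s / k s) ^ 2)) with (S s). field. lra.
    + rewrite cos_shift, sin_shift. change (sin ?a / cos ?a) with (tan a). rewrite tan_atan.
      rewrite HY, HZ, Hkb, Htb. field. lra.
  - intros s Hs.
    destruct (HD s Hs) as [Hx0 [ey [ez [Hkb [Htb [Hdy Hdz]]]]]].
    destruct (HE s Hs) as [HkT [Hy [Hz2 Hsq]]].
    destruct (HS s Hs) as [HS1 HS2].
    destruct (HFF s Hs) as [_ [_ [_ [_ [_ [_ [_ [_ [_ [_ [_ Hk]]]]]]]]]]].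
    assert (Hder : is_derive (fun v => taub v / kb v) (sT s) (tauT (sT s) / y (sT s) ^ 2)).
    { apply (is_derive_ext_loc (fun v => - (dot (X v) (BT v) / dot (X v) (NT v)))).
      - eapply filter_imp; [|exact (HJloc s Hs)]. intros v [s' [Hs' ->]].
        destruct (HD s' Hs') as [_ [ey' [ez' [Hkb' [Htb' _]]]]].
        destruct (HE s' Hs') as [HkT' [Hy' _]].
        change (@eq R (- (dot (X (sT s')) (BT (sT s')) / dot (X (sT s')) (NT (sT s')))) (taub (sT s') / kb (sT s'))).
        rewrite Hkb', Htb', <- ey', <- ez'. field. lra.
      - eapply isd_val. apply isd_opp. apply is_derive_div; [exact Hdz|exact Hdy|rewrite <- ey; lra].
        cbv beta. rewrite <- ey, <- ez. replace (z (sT s) * (tauT (sT s) * z (sT s))) with (tauT (sT s) * z (sT s) ^ 2) by ring.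
        rewrite Hz2. field. lra. }
    replace (Derive (fun u => taub u / kb u) (sT s)) with (tauT (sT s) / y (sT s) ^ 2)
      by (symmetry; exact (is_derive_unique _ _ _ Hder)).
    assert (Hsb : sqrt (kb (sT s) ^ 2 + taub (sT s) ^ 2) = kT (sT s)).
    { rewrite <- (sqrt_pow2 (kT (sT s))) by lra. f_equal. rewrite Hkb, Htb.
      replace ((- kT (sT s) * y (sT s)) ^ 2 + (kT (sT s) * z (sT s)) ^ 2) with
        (kT (sT s) ^ 2 * (y (sT s) ^ 2 + z (sT s) ^ 2)) by ring. rewrite Hz2. ring. }
    rewrite Hsb, Hsq, Hkb, (HB' s Hs).
    assert (Ht : tauT (sT s) = fd s / (S s * S s) / k s).
    { rewrite HS2, <- HC by exact Hs. field. lra. }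
    rewrite Ht. fold (f s). fold (fd s). field. lra.
Qed.
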